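(* Let $G$ be a non-regular simple graph on $n$ vertices, and let $u,v$ be vertices of $G$ with $d_G(u)<d_G(v)$. Let $R:=V(G)\setminus\{u,v\}$, $X:=N(u)\setminus N[v]$, $W:=N(u)\cap N(v)$, and $Z:=\{w\in R: w\notin N(u)\cup N(v)\}$. Let $k$ be an integer with $2\le k\le n-2$. If $k-1\le |X|+|W|+|Z|$, then $F_k(G)$ is non-regular.
   Context: For a simple graph $G=(V,E)$ on $n$ vertices and an integer $1\le k<n$, the $k$-token graph $F_k(G)$ is the graph whose vertices are all $k$-element subsets of $V$, two such subsets $A,B$ being adjacent whenever their symmetric difference $A\triangle B$ is a pair $\{a,b\}$ with $a$ adjacent to $b$ in $G$. $N(x)$ is the set of neighbors of $x$ in $G$, $N[x]=N(x)\cup\{x\}$, and $d_G(x)=|N(x)|$. *)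

(* Defs.v *)
From mathcomp Require Import all_boot.
Set Implicit Arguments. Unset Strict Implicit. Unset Printing Implicit Defensive.

(* A simple graph is a symmetric irreflexive relation e on a finType T. *)
Section Graphs.
Variable T : finType.
Variable e : rel T.

Definition nbh (x : T) : {set T} := [set y | e x y].
Definition deg (x : T) : nat := #|nbh x|.

Definition regular : Prop := forall x y : T, deg x = deg y.

Definition token_adj (k : nat) (A B : {set T}) : bool :=
  [&& #|A| == k, #|B| == k &
      [exists a : T, exists b : T,
         e a b && ((A :\: B) :|: (B :\: A) == [set a; b])]].

Definition token_deg (k : nat) (A : {set T}) : nat :=
  #|[set B : {set T} | token_adj k A B]|.

Definition token_regular (k : nat) : Prop :=
  forall A B : {set T}, #|A| = k -> #|B| = k -> token_deg k A = token_deg k B.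

End Graphs.

(* Main.v *)
Require Import Defs.
From mathcomp Require Import all_boot.
From mathcomp Require Import zify.

Section Aux.
Variable T : finType.
Variable e : rel T.
Hypothesis e_sym : symmetric e.
Hypothesis e_irr : irreflexive e.

Lemma card_sumE (I : finType) (A : {pred I}) : #|A| = \sum_i ((i \in A) : nat).
Proof.
rewrite -sum1_card big_mkcond /=; apply: eq_bigr => i _; by case: (i \in A).
Qed.

Definition Pc (A : {set T}) : {set T * T} :=
  [set p | [&& p.1 \in A, p.2 \notin A & e p.1 p.2]].

Definition fA (A : {set T}) (p : T * T) : {set T} := p.2 |: (A :\ p.1).

Lemma fA_inj (A : {set T}) : {in Pc A &, injective (fA A)}.
Proof.
move=> [a b] [c d]; rewrite !inE /fA /= => /and3P [aA bA eab] /and3P [cA dA ecd] H.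
have bd : b = d.
  have : b \in d |: (A :\ c) by rewrite -H !inE eqxx.
  rewrite !inE => /orP [/eqP //|/andP [_ bA']]; by rewrite bA' in bA.
subst d; congr pair.
apply/eqP; apply/negPn/negP => ac.
have : a \in b |: (A :\ c) by rewrite !inE eq_sym ac aA orbT.
rewrite -H !inE eqxx /= orbF => /eqP ab; subst b; by rewrite aA in bA.
Qed.

Lemma token_adj_img k (A : {set T}) : #|A| = k ->
  [set B | token_adj e k A B] = fA A @: Pc A.
Proof.
move=> cA; apply/setP => B; rewrite inE; apply/idP/idP.
- rewrite /token_adj => /and3P [_ /eqP cB /existsP [a /existsP [b /andP [eab /eqP D]]]].
  have hAB : #|A :\: B| = #|B :\: A| by rewrite !cardsD setIC cA cB.
  have aD : a \in (A :\: B) :|: (B :\: A) by rewrite D !inE eqxx.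
  have bD : b \in (A :\: B) :|: (B :\: A) by rewrite D !inE eqxx orbT.
  have sub : forall x, x \in (A :\: B) :|: (B :\: A) -> (x == a) || (x == b)
    by move=> x; rewrite D !inE.
  have nab : a != b by apply/eqP => ab; subst b; by rewrite e_irr in eab.
  have key : forall x y, x \in A :\: B -> y \in B :\: A -> e x y ->
      (forall z, z \in (A :\: B) :|: (B :\: A) -> (z == x) || (z == y)) ->
      B \in fA A @: Pc A.
    move=> x y xAB yBA exy sz; apply/imsetP; exists (x, y).
      move: xAB yBA; rewrite !inE /= => /andP [_ ->] /andP [-> _]; by rewrite exy.
    rewrite /fA /=; apply/setP => z; rewrite !inE.
    move: xAB yBA; rewrite !inE => /andP [xB xA] /andP [yA yB].
    case: (eqVneq z x) => [->|zx]; first by rewrite (negbTE xB) /= orbF; apply/esym/eqP => xy; move: yA; rewrite -xy xA.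
    case: (eqVneq z y) => [->|zy]; first by rewrite yB.
    rewrite /=; case zB: (z \in B); case zA: (z \in A) => //.
    - by have := sz z; rewrite !inE zA zB (negbTE zx) (negbTE zy) => /(_ isT).
    - by have := sz z; rewrite !inE zA zB (negbTE zx) (negbTE zy) => /(_ isT).
  move: aD bD; rewrite !inE.
  case aB: (a \in B); case aA: (a \in A); case bB: (b \in B); case bA: (b \in A) => //= _ _.
  + (* both in B\A *)
    exfalso.
    have : #|A :\: B| = 0.
      apply/eqP; rewrite cards_eq0; apply/eqP/setP => z; rewrite !inE.
      apply/negP => /andP [zB zA].
      have := sub z; rewrite !inE zB zA /= => /(_ isT) /orP [/eqP zx|/eqP zx];
        subst z; [by rewrite zA in aA | by rewrite zA in bA].
    rewrite hAB => /eqP; rewrite cards_eq0 => /eqP h.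
    have : a \in B :\: A by rewrite inE aB aA.
    by rewrite h inE.
  + (* a in B\A, b in A\B *)
    apply: (key b a); [by rewrite inE bB bA | by rewrite inE aB aA | by rewrite e_sym | by move=> z /sub; rewrite orbC].
  + apply: (key a b); rewrite ?inE ?aA ?aB ?bA ?bB //.
  + (* both in A\B *)
    exfalso.
    have : #|B :\: A| = 0.
      apply/eqP; rewrite cards_eq0; apply/eqP/setP => z; rewrite !inE.
      apply/negP => /andP [zA zB].
      have := sub z; rewrite !inE zB (negbTE zA) andbF /= => /(_ isT) /orP [/eqP zx|/eqP zx];
        subst z; [by rewrite zB in aB | by rewrite zB in bB].
    rewrite -hAB => /eqP; rewrite cards_eq0 => /eqP h.
    have : a \in A :\: B by rewrite inE aB aA.
    by rewrite h inE.
- case/imsetP => [[a b]]; rewrite inE /fA /= => /and3P [aA bA eab] ->.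
  rewrite /token_adj; apply/and3P; split.
  + by rewrite cA.
  + have hk : #|A :\ a| = k.-1 by move: (cardsD1 a A); rewrite aA cA; lia.
    rewrite cardsU1 !inE (negbTE bA) andbF hk /=.
    apply/eqP; have : 0 < #|A| by apply/card_gt0P; exists a.
    rewrite cA; lia.
  + apply/existsP; exists a; apply/existsP; exists b; rewrite eab /=.
    apply/eqP/setP => z; rewrite !inE.
    have nab : (a == b) = false by apply/eqP => ab; move: bA; rewrite -ab aA.
    case: (eqVneq z a) => [->|za]; first by rewrite nab aA.
    case: (eqVneq z b) => [->|zb] /=; first by rewrite (negbTE bA).
    by case: (z \in A).
Qed.

Lemma token_deg_cut k (A : {set T}) : #|A| = k ->
  token_deg e k A = \sum_a \sum_y [&& a \in A, y \notin A & e a y].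
Proof.
move=> cA; rewrite /token_deg token_adj_img // card_in_imset; last exact: fA_inj.
rewrite card_sumE pair_bigA /=; apply: eq_bigr => p _; by rewrite inE.
Qed.

Lemma sum_eq1 (x : T) (F : T -> nat) : \sum_a ((a == x) * F a) = F x.
Proof.
rewrite (bigD1 x) //= eqxx mul1n big1 ?addn0 // => a /negbTE ->; by rewrite mul0n.
Qed.

Lemma cut_add (S : {set T}) x : x \notin S ->
  \sum_a \sum_y [&& a \in x |: S, y \notin x |: S & e a y]
  + (\sum_y [&& y \in S & e x y]) + (\sum_y [&& y \in S & e x y])
  = \sum_a \sum_y [&& a \in S, y \notin S & e a y] + \sum_y e x y.
Proof.
move=> xS.
have pt : forall a y,
  [&& a \in x |: S, y \notin x |: S & e a y] + (a == x) * [&& y \in S & e x y]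
   + (y == x) * [&& a \in S & e x a]
  = [&& a \in S, y \notin S & e a y] + (a == x) * e x y.
  move=> a y; rewrite !inE.
  case: (eqVneq a x) => [->|ax]; case: (eqVneq y x) => [->|yx] /=;
    rewrite ?e_irr ?(negbTE xS) ?muln0 ?mul0n ?mul1n ?addn0 //=.
  - case: (y \in S); by case: (e x y).
  - by rewrite e_sym; case: (a \in S); case: (e a x).
have Hs : \sum_a \sum_y ([&& a \in x |: S, y \notin x |: S & e a y]
     + (a == x) * [&& y \in S & e x y] + (y == x) * [&& a \in S & e x a])
  = \sum_a \sum_y ([&& a \in S, y \notin S & e a y] + (a == x) * e x y).
  by apply: eq_bigr => a _; apply: eq_bigr => y _; exact: pt.
have t1 : \sum_a \sum_y (a == x) * [&& y \in S & e x y] = \sum_y [&& y \in S & e x y].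
  rewrite (eq_bigr (fun a => (a == x) * \sum_y [&& y \in S & e x y])) ?sum_eq1 //.
  by move=> a _; rewrite big_distrr.
have t3 : \sum_a \sum_y (a == x) * e x y = \sum_y e x y.
  rewrite (eq_bigr (fun a => (a == x) * \sum_y e x y)) ?sum_eq1 //.
  by move=> a _; rewrite big_distrr.
have t2 : \sum_a \sum_y (y == x) * [&& a \in S & e x a] = \sum_y [&& y \in S & e x y].
  transitivity (\sum_a ([&& a \in S & e x a] : nat)).
    by apply: eq_bigr => a _; exact: (sum_eq1 x (fun _ => ([&& a \in S & e x a] : nat))).
  by apply: eq_bigr => y _; rewrite e_sym.
have sp : forall (F G : T -> T -> nat), \sum_a \sum_y (F a y + G a y) = \sum_a \sum_y F a y + \sum_a \sum_y G a y.
  by move=> F G; rewrite -big_split /=; apply: eq_bigr => a _; rewrite big_split.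
rewrite sp sp in Hs; rewrite sp t1 t2 t3 in Hs.
by rewrite Hs.
Qed.

End Aux.

Theorem lemma2 (T : finType) (e : rel T)
  (e_sym : symmetric e) (e_irr : irreflexive e)
  (nonreg : ~ regular e) (u v : T) (huv : deg e u < deg e v)
  (k : nat) (hk2 : 2 <= k) (hkn : k <= #|T| - 2)
  (hX : k - 1 <= #|[set x | e u x & ~~ e v x && (x != v)]|
                 + #|[set x | e u x & e v x]|
                 + #|[set w | [&& w != u, w != v, ~~ e u w & ~~ e v w]]|) :
  ~ token_regular e k.
Proof.
move=> treg.
set U := [set y | [&& y != u, y != v & e v y ==> e u y]].
have hU : k - 1 <= #|U|.
  apply: (leq_trans hX); rewrite !card_sumE -!big_split /=; apply: leq_sum => y _.
  rewrite !inE.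
  case: (eqVneq y u) => [->|yu]; first by rewrite e_irr.
  case: (eqVneq y v) => [->|yv]; first by rewrite e_irr /= andbF.
  by case: (e u y); case: (e v y).
case/card_geqP: hU => s [us ss sU].
set S := [set x in s].
have cS : #|S| = k - 1 by rewrite cardsE; move/card_uniqP: us => ->.
have SU : forall y, y \in S -> [&& y != u, y != v & e v y ==> e u y].
  by move=> y; rewrite inE => /sU; rewrite inE.
have uS : u \notin S by apply/negP => /SU; rewrite eqxx.
have vS : v \notin S by apply/negP => /SU; rewrite eqxx andbF.
have cu : #|u |: S| = k by rewrite cardsU1 uS cS; lia.
have cv : #|v |: S| = k by rewrite cardsU1 vS cS; lia.
have := treg _ _ cu cv.
rewrite !token_deg_cut // => heq.
have hu := @cut_add T e e_sym e_irr S u uS.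
have hv := @cut_add T e e_sym e_irr S v vS.
have dle : \sum_y [&& y \in S & e v y] <= \sum_y [&& y \in S & e u y].
  apply: leq_sum => y _; case yS: (y \in S) => //=.
  have := SU y yS; case: (e v y) => //= /and3P [_ _ ->] //.
move: huv; rewrite /deg !card_sumE.
have -> : \sum_i ((i \in nbh e u) : nat) = \sum_y e u y by apply: eq_bigr => i _; rewrite inE.
have -> : \sum_i ((i \in nbh e v) : nat) = \sum_y e v y by apply: eq_bigr => i _; rewrite inE.
lia.
Qed.
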